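(* Let $A=\{a_1,a_2,\ldots,a_k\}$ be a set of $k\ge1$ distinct positive integers, let $\tau$ be a permutation of $\{1,2,\ldots,k\}$, and let $A_{\tau(j)}=\{a_{\tau(1)},\ldots,a_{\tau(j)}\}$ for $j=1,\ldots,k$, with $A_{\tau(0)}=\emptyset$. Then the following are equivalent: (a) The elements of $A$ are pairwise co-prime (i.e. every $2$-element subset of $A$ has gcd $1$). (b) \[ 2|A|-1 = \left( 1 + 4 \sum_{d=1}^{\sup A} \mu(d)\, v(A,d)\,(v(A,d)-1) \right)^{1/2}. \] (c) \[ 2|A|-1 = \left( 1 + 8 \sum_{j=1}^k \sum_{d\mid a_{\tau(j)}} \mu(d)\, v(A_{\tau(j-1)},d) \right)^{1/2}. \]
   Context: $\sup A$ is the largest element of $A$. $\mu$ is the Möbius function. For a finite set $X$ of positive integers and a positive integer $d$, $v(X,d)$ is the number of multiples of $d$ in $X$ (so $v(\emptyset,d)=0$). *)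

(* Defs.v *)
From HB Require Import structures.
From mathcomp Require Import all_boot all_order all_algebra all_fingroup.
Set Implicit Arguments. Unset Strict Implicit. Unset Printing Implicit Defensive.
Import Order.TTheory GRing.Theory Num.Theory.

(* Möbius function: mu n = (-1)^(number of prime factors) if n is squarefree,
   0 if n has a square prime factor; mu 0 := 0 (never used, d >= 1). *)
Definition moebius (n : nat) : int :=
  if n == 0%N then 0%R
  else if all (fun p => logn p n <= 1)%N (primes n)
       then ((-1) ^+ size (primes n))%R
       else 0%R.

(* v(X,d): number of multiples of d in the finite set X (given as a
   duplicate-free sequence). *)
Definition v (X : seq nat) (d : nat) : nat := count (fun x => d %| x) X.

(* Main.v *)
Require Import Defs.
From HB Require Import structures.
From mathcomp Require Import all_boot all_order all_algebra all_fingroup.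
From mathcomp Require Import zify.
Import Order.TTheory GRing.Theory Num.Theory.
Local Open Scope ring_scope.
Local Close Scope ring_scope.

Lemma moebius1 : moebius 1 = 1%R.
Proof. by []. Qed.

Lemma moebius_pM p e : prime p -> (0 < e)%N -> ~~ (p %| e) ->
  moebius (p * e) = (- moebius e)%R.
Proof.
move=> pp e0 npe.
have p0 := prime_gt0 pp.
have pe0 : (0 < p * e)%N by rewrite muln_gt0 p0.
have Hperm : perm_eq (primes (p * e)) (p :: primes e).
  apply: uniq_perm; first exact: primes_uniq.
    by rewrite /= primes_uniq andbT mem_primes (negPf npe) !andbF.
  move=> q; rewrite primesM // in_cons primes_prime //.
  by rewrite mem_seq1.
rewrite /moebius (negPf (lt0n_neq0 pe0)) (negPf (lt0n_neq0 e0)).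
rewrite (perm_size Hperm) (perm_all _ Hperm) /=.
have -> : (logn p (p * e) <= 1)%N.
  by rewrite lognM // logn_prime // eqxx logn_coprime // prime_coprime.
have -> : all (fun q => logn q (p * e) <= 1)%N (primes e) =
          all (fun q => logn q e <= 1)%N (primes e).
  apply: eq_in_all => q; rewrite mem_primes => /and3P [qp _ qe].
  rewrite lognM // logn_prime //.
  case: eqP => [eqq|]; last by rewrite add0n.
  by subst q; rewrite qe in npe.
case: (all (fun q => logn q e <= 1)%N (primes e)); last by rewrite GRing.oppr0.
by rewrite exprS mulN1r.
Qed.

Lemma moebius_sq0 p d : prime p -> (0 < d)%N -> (p * p %| d) -> moebius d = 0%R.
Proof.
move=> pp d0 ppd.
rewrite /moebius (negPf (lt0n_neq0 d0)).
have pd : p %| d by apply: dvdn_trans ppd; apply: dvdn_mulr.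
have pin : p \in primes d by rewrite mem_primes pp d0 pd.
have : (2 <= logn p d)%N by rewrite -pfactor_dvdn // expnS expn1.
move=> H; case: ifP => // /allP /(_ _ pin); rewrite leqNgt.
by rewrite (leq_trans _ H).
Qed.
Lemma invol_perm (T : eqType) (f : T -> T) (s : seq T) :
  uniq s -> {in s, forall x, f x \in s} -> {in s, forall x, f (f x) = x} ->
  perm_eq (map f s) s.
Proof.
move=> us fs ff.
apply: uniq_perm => //.
  rewrite map_inj_in_uniq // => x y xs ys e.
  by rewrite -(ff x xs) e ff.
move=> x; apply/mapP/idP => [[y ys ->]|xs]; first exact: fs.
by exists (f x); rewrite ?ff ?fs.
Qed.

Lemma mu_sum n : (0 < n)%N -> (\sum_(d <- divisors n) moebius d = (n == 1%N)%:Z)%R.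
Proof.
move=> n0.
case: (ltngtP n 1) => [|n1|->]; first by rewrite ltnNge n0.
  2: by rewrite (_ : divisors 1 = [:: 1%N]) // big_seq1 moebius1.
set p := pdiv n.
have pp : prime p by apply: pdiv_prime.
have pn : p %| n by apply: pdiv_dvd.
have p0 := prime_gt0 pp.

set s := [seq d <- divisors n | ~~ (p * p %| d)].
have -> : (\sum_(d <- divisors n) moebius d = \sum_(d <- s) moebius d)%R.
  rewrite big_filter [RHS]big_mkcond /=; apply: eq_big_seq => d.
  rewrite -dvdn_divisors // => dn.
  case: ifP => // /negbFE ppd.
  apply: (@moebius_sq0 p) => //.
  by apply: dvdn_gt0 n0 dn.
pose f d := if p %| d then d %/ p else p * d.
have sP d : d \in s -> [/\ d %| n, (0 < d)%N & ~~ (p * p %| d)].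
  rewrite mem_filter -dvdn_divisors // => /andP [H1 H2]; split => //.
  exact: dvdn_gt0 n0 H2.
have key d : d \in s -> [/\ f d \in s, f (f d) = d & moebius (f d) = (- moebius d)%R].
  move=> /sP [dn d0 npp]; rewrite /f.
  case: ifP => pd.
    have de : d = p * (d %/ p) by rewrite mulnC divnK.
    set e := d %/ p in de *.
    have e0 : (0 < e)%N by move: d0; rewrite de muln_gt0 => /andP [].
    have npe : ~~ (p %| e) by apply: contra npp => pe; rewrite de dvdn_pmul2l.
    rewrite (negPf npe); split.
    - rewrite mem_filter -dvdn_divisors //; apply/andP; split.
        by apply: contra npe; apply: dvdn_trans; apply: dvdn_mulr.
      by apply: dvdn_trans dn; rewrite de dvdn_mull.
    - by rewrite -de.
    - by rewrite [in RHS]de moebius_pM // opprK.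
  have cp : coprime p d by rewrite prime_coprime // pd.
  rewrite dvdn_mulr // mulKn //; split => //.
  - by rewrite mem_filter -dvdn_divisors // dvdn_pmul2l // pd (Gauss_dvd _ cp) pn dn.
  - by rewrite moebius_pM // pd.
have us : uniq s by rewrite filter_uniq // divisors_uniq.
have hp := @invol_perm _ f s us (fun d ds => let: And3 a _ _ := key d ds in a) (fun d ds => let: And3 _ b _ := key d ds in b).
have : (\sum_(d <- s) moebius d = - \sum_(d <- s) moebius d)%R.
  rewrite -{1}(perm_big _ hp) big_map -sumrN.
  by apply: eq_big_seq => d ds; case: (key d ds).
move: (\sum_(d <- s) moebius d)%R => x H /=; lia.
Qed.

Lemma sum_enum_nat k (P : pred 'I_k) (F : 'I_k -> nat) :
  \sum_(i <- enum 'I_k | P i) F i = \sum_(i < k | P i) F i.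
Proof. by rewrite enumT. Qed.

Lemma posz_sum (I : Type) (r : seq I) (P : pred I) (F : I -> nat) :
  ((\sum_(i <- r | P i) F i)%:Z = \sum_(i <- r | P i) (F i)%:Z)%R.
Proof. by elim/big_rec2: _ => // i x y _ IH; rewrite PoszD IH. Qed.

Lemma count_sum (T : Type) (P : pred T) (s : seq T) :
  count P s = \sum_(x <- s) P x.
Proof. by elim: s => [|x s IH]; rewrite ?big_nil ?big_cons //= IH. Qed.

Lemma L0 (I : Type) (r : seq I) (b : pred I) (F : I -> int) :
  (\sum_(d <- r) F d * (b d : nat)%:Z = \sum_(d <- r | b d) F d)%R.
Proof.
rewrite [RHS]big_mkcond; apply: eq_bigr => d _.
by case: (b d); rewrite ?mulr1 ?mulr0.
Qed.

Lemma L1 m x : (0 < m)%N ->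
  (\sum_(d <- divisors m | (d %| x)%N) moebius d = (coprime m x : nat)%:Z)%R.
Proof.
move=> m0.
have g0 : (0 < gcdn m x)%N by rewrite gcdn_gt0 m0.
rewrite -big_filter (perm_big (divisors (gcdn m x))) ?mu_sum //.
apply: uniq_perm; rewrite ?filter_uniq ?divisors_uniq // => d.
by rewrite mem_filter -!dvdn_divisors // dvdn_gcd andbC.
Qed.

Lemma L2 m N (F : nat -> int) : (0 < m)%N -> (m <= N)%N ->
  (\sum_(1 <= d < N.+1 | (d %| m)%N) F d = \sum_(d <- divisors m) F d)%R.
Proof.
move=> m0 mN.
rewrite -big_filter; apply: perm_big.
apply: uniq_perm; rewrite ?filter_uniq ?divisors_uniq ?iota_uniq // => d.
rewrite mem_filter -dvdn_divisors // mem_index_iota.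
apply/andP/idP => [[] //|dm]; split => //.
have d0 : (0 < d)%N by apply: dvdn_gt0 m0 dm.
by rewrite d0 ltnS (leq_trans (dvdn_leq m0 dm) mN).
Qed.

Lemma sum_lt n j : (\sum_(0 <= i < n) (if (i < j)%N then 1 else 0))%N = minn n j.
Proof.
elim: n => [|n IH]; first by rewrite big_geq // min0n.
rewrite big_nat_recr //= IH; case: ltnP => h; lia.
Qed.

Lemma tri n : (2 * \sum_(0 <= i < n) i = n * n.-1)%N.
Proof.
elim: n => [|n IH]; first by rewrite big_geq.
rewrite big_nat_recr //= mulnDr IH; case: n {IH} => //= n; lia.
Qed.

Local Open Scope ring_scope.

Lemma sqrt_eqn (R : rcfType) (y x : nat) :
  (y%:R : R) = Num.sqrt (x%:R) <-> x = (y ^ 2)%N.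
Proof.
split => [H|->].
- apply/eqP; rewrite -(eqr_nat R) natrX H sqr_sqrtr ?ler0n //.
- by rewrite natrX sqrtr_sqr ger0_norm ?ler0n.
Qed.

Theorem theorem5p5 (R : rcfType) (k : nat) (a : 'I_k -> nat) (tau : 'S_k) :
  (0 < k)%N -> injective a -> (forall i, 0 < a i)%N ->
  let A : seq nat := [seq a i | i <- enum 'I_k] in
  let supA : nat := (\max_(i < k) a i)%N in
  (* A_{tau(j)} for the 0-based prefix length j: {a_tau(i) | i < j} *)
  let Atau (j : nat) : seq nat := [seq a (tau i) | i <- [seq i <- enum 'I_k | (nat_of_ord i < j)%N]] in
  let cond_a := forall i j : 'I_k, i != j -> coprime (a i) (a j) in
  let cond_b :=
    ((2 * (size A)%:Z - 1)%:~R : R) =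
    Num.sqrt (1 + 4 * (\sum_(1 <= d < supA.+1)
                 (moebius d * (v A d)%:Z * ((v A d)%:Z - 1)))%:~R) in
  let cond_c :=
    ((2 * (size A)%:Z - 1)%:~R : R) =
    Num.sqrt (1 + 8 * (\sum_(j < k) \sum_(d <- divisors (a (tau j)))
                 (moebius d * (v (Atau j) d)%:Z))%:~R) in
  (cond_a <-> cond_b) /\ (cond_a <-> cond_c).
Proof.
move=> k0 ainj apos A supA Atau cond_a cond_b cond_c.
pose c (i j : 'I_k) : nat := coprime (a i) (a j).
pose Pb := (\sum_(i < k) \sum_(j < k | j != i) c i j)%N.
pose Qc := (\sum_(j < k) \sum_(i < k | (i < j)%N) c (tau j) (tau i))%N.
have sA : size A = k by rewrite size_map size_enum_ord.
have vA d : v A d = (\sum_(i < k) ((d %| a i)%N : nat))%N.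
  by rewrite /v count_sum big_map sum_enum_nat.
have FB : (\sum_(1 <= d < supA.+1) (moebius d * (v A d)%:Z * ((v A d)%:Z - 1))) = Pb%:Z.
  have vv d : (v A d)%:Z * ((v A d)%:Z - 1) =
      \sum_(i < k) \sum_(j < k | j != i) (((d %| a i) && (d %| a j))%N : nat)%:Z.
    have H : (v A d * v A d = v A d + \sum_(i < k) \sum_(j < k | j != i)
                (((d %| a i) && (d %| a j))%N : nat))%N.
      rewrite {1}vA big_distrl /= vA -big_split /=; apply: eq_bigr => i _.
      rewrite big_distrr /= (bigD1 i) //=; congr (_ + _)%N.
        by case: (d %| a i)%N.
      by apply: eq_bigr => j _; rewrite mulnb.
    rewrite mulrBr mulr1 -PoszM H PoszD addrAC subrr add0r posz_sum.
    by apply: eq_bigr => i _; rewrite posz_sum.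
  under eq_bigr => d _ do rewrite -mulrA vv mulr_sumr.
  rewrite exchange_big /= posz_sum; apply: eq_bigr => i _.
  under eq_bigr => d _ do rewrite mulr_sumr.
  rewrite exchange_big /= posz_sum; apply: eq_bigr => j _.
  rewrite L0 big_mkcondr L2 //; last by apply: leq_bigmax.
  by rewrite -big_mkcond L1.
have vC (j : 'I_k) d : v (Atau j) d = (\sum_(i < k | (i < j)%N) ((d %| a (tau i))%N : nat))%N.
  by rewrite /v count_sum /Atau big_map big_filter sum_enum_nat.
have FC : (\sum_(j < k) \sum_(d <- divisors (a (tau j)))
                 (moebius d * (v (Atau j) d)%:Z)) = Qc%:Z.
  rewrite posz_sum; apply: eq_bigr => j _.
  under eq_bigr => d _ do rewrite vC posz_sum mulr_sumr.
  rewrite exchange_big /= posz_sum; apply: eq_bigr => i _.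
  by rewrite L0 L1.
have HB : (Pb <= \sum_(i < k) \sum_(j < k | j != i) 1 ?= iff
            [forall i : 'I_k, [forall (j | j != i), coprime (a i) (a j)]])%N.
  apply: leqif_sum => i _; apply: leqif_sum => j _; rewrite /c.
  by case: (coprime (a i) (a j)); split.
have SB : (\sum_(i < k) \sum_(j < k | j != i) 1 = k * k.-1)%N.
  rewrite (eq_bigr (fun _ => k.-1)) ?sum_nat_const ?card_ord //.
  by move=> i _; rewrite sum1_card cardC1 card_ord.
have HC : (Qc <= \sum_(j < k) \sum_(i < k | (i < j)%N) 1 ?= iff
            [forall j : 'I_k, [forall (i : 'I_k | (i < j)%N), coprime (a (tau j)) (a (tau i))]])%N.
  apply: leqif_sum => j _; apply: leqif_sum => i _; rewrite /c.
  by case: (coprime (a (tau j)) (a (tau i))); split.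
have SC : (2 * \sum_(j < k) \sum_(i < k | (i < j)%N) 1 = k * k.-1)%N.
  have -> : (\sum_(j < k) \sum_(i < k | (i < j)%N) 1 = \sum_(j < k) (j : nat))%N.
    apply: eq_bigr => j _; rewrite big_mkcond /=.
    rewrite -(big_mkord xpredT (fun i => if (i < j)%N then 1%N else 0%N)) sum_lt.
    by apply/minn_idPr; apply: ltnW.
  by rewrite -tri (big_mkord xpredT (fun j => j)).
have EA : cond_a <-> [forall i : 'I_k, [forall (j | j != i), coprime (a i) (a j)]].
  split => [H|/forallP H i j ij].
    by apply/forallP => i; apply/forallP => j; apply/implyP => ji; apply: H; rewrite eq_sym.
  by have /forallP /(_ i) /implyP /(_ ij) := H j; rewrite coprime_sym.
have EC : cond_a <-> [forall j : 'I_k, [forall (i : 'I_k | (i < j)%N), coprime (a (tau j)) (a (tau i))]].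
  split => [H|/forallP H i j ij].
    apply/forallP => j; apply/forallP => i; apply/implyP => ij; apply: H.
    rewrite (inj_eq (@perm_inj _ tau)); apply/eqP => e; by rewrite e ltnn in ij.
  move: ij; have [i' ->] : exists i', i = tau i' by exists ((tau^-1)%g i); rewrite permKV.
  have [j' ->] : exists j', j = tau j' by exists ((tau^-1)%g j); rewrite permKV.
  move=> ij; case: (ltngtP i' j') => h.
  - by move: (H j') => /forallP /(_ i') /implyP /(_ h); rewrite coprime_sym.
  - by move: (H i') => /forallP /(_ j') /implyP /(_ h).
  - by move: ij; rewrite (ord_inj h) eqxx.
have L2k : (2 * (size A)%:Z - 1) = ((2 * k).-1)%N%:Z by rewrite sA; lia.
have eB : (cond_b <-> Pb = (k * k.-1)%N).
  rewrite /cond_b L2k FB pmulrn.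
  have -> : (1 + 4 * (Pb%:Z)%:~R : R) = ((1 + 4 * Pb)%N)%:R by rewrite pmulrn natrD natrM.
  rewrite sqrt_eqn; split => ?; nia.
have eC : (cond_c <-> (2 * Qc = k * k.-1)%N).
  rewrite /cond_c L2k FC pmulrn.
  have -> : (1 + 8 * (Qc%:Z)%:~R : R) = ((1 + 8 * Qc)%N)%:R by rewrite pmulrn natrD natrM.
  rewrite sqrt_eqn; split => ?; nia.
have HB' : Pb = (k * k.-1)%N <-> [forall i : 'I_k, [forall (j | j != i), coprime (a i) (a j)]].
  by rewrite -SB -(HB.2); split => [->|/eqP].
have HC' : (2 * Qc = k * k.-1)%N <-> [forall j : 'I_k, [forall (i : 'I_k | (i < j)%N), coprime (a (tau j)) (a (tau i))]].
  rewrite -(HC.2) -SC; split => [h|/eqP->] //; apply/eqP; lia.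
split.
- exact: iff_trans EA (iff_sym (iff_trans eB HB')).
- exact: iff_trans EC (iff_sym (iff_trans eC HC')).
Qed.
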